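(* Let $\mathcal{P}$ be a finite set of atomic propositions, $u \in (2^{\mathcal{P}})^\ast$, $v \in (2^{\mathcal{P}})^+$, $\rho$ a regular expression, $\varphi$ a PSL formula, $m$ the number of states of the minimal deterministic finite automaton over $2^{\mathcal{P}}$ recognizing $L(\rho)$, and $b = m+1$. Then for every $i$ with $0 \le i \le |uv|-1$: $uv^\omega[i,\infty) \models \rho \mapsto \varphi$ if and only if for all $j \in \mathbb{N}$ with $i < j < |u| + b|v|$, $uv^\omega[i,j) \vdash \rho$ implies $uv^\omega[j-1,\infty) \models \varphi$.
   Context: Words: for $\alpha = a_0a_1\ldots$ and $i\le j$, $\alpha[i,j) = a_i\ldots a_{j-1}$ ($\alpha[i,i)=\varepsilon$), $\alpha[i]=a_i$, $\alpha[i,\infty)=a_ia_{i+1}\ldots$; $uv^\omega = uvvv\ldots$. Regular expressions: atomic expressions $\xi ::= p \in \mathcal{P} \mid \lnot \xi \mid \xi \lor \xi$, with $[\![p]\!] = \{A \subseteq \mathcal{P} : p \in A\}$, $[\![\lnot\xi]\!] = 2^{\mathcal{P}} \setminus [\![\xi]\!]$, $[\![\xi_1 \lor \xi_2]\!] = [\![\xi_1]\!] \cup [\![\xi_2]\!]$. Regular expressions $\rho ::= \varepsilon \mid \xi \mid \rho + \rho \mid \rho \circ \rho \mid \rho^\ast$. Matching on infixes of a word $w$: $w[i,j) \vdash \varepsilon$ iff $j=i$; $w[i,j) \vdash \xi$ iff $j=i+1$ and $w[i] \in [\![\xi]\!]$; $w[i,j)\vdash \rho_1+\rho_2$ iff $w[i,j)\vdash\rho_1$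 or $w[i,j)\vdash\rho_2$; $w[i,j)\vdash \rho_1\circ\rho_2$ iff there is $k\in\{i,\ldots,j\}$ with $w[i,k)\vdash\rho_1$ and $w[k,j)\vdash\rho_2$; $w[i,j)\vdash\rho^\ast$ iff $j=i$ or there is $k\in\{i+1,\ldots,j\}$ with $w[i,k)\vdash\rho$ and $w[k,j)\vdash\rho^\ast$. $L(\rho)=\{w\in(2^{\mathcal{P}})^\ast : w[0,|w|)\vdash\rho\}$. PSL formulas: $\varphi ::= p\in\mathcal{P} \mid \lnot\varphi \mid \varphi\lor\varphi \mid \mathbf{X}\varphi \mid \varphi\,\mathbf{U}\,\varphi \mid \rho\mapsto\varphi$, evaluated on $\alpha\in(2^{\mathcal{P}})^\omega$: $\alpha\models p$ iff $p\in\alpha[0]$; $\alpha\models\lnot\varphi$ iff not $\alpha\models\varphi$; $\alpha\models\varphi_1\lor\varphi_2$ iff $\alpha\models\varphi_1$ or $\alpha\models\varphi_2$; $\alpha\models\mathbf{X}\varphi$ iff $\alpha[1,\infty)\models\varphi$; $\alpha\models\varphi_1\mathbf{U}\varphi_2$ iff there is $j$ with $\alpha[j,\infty)\models\varphi_2$ and $\alpha[i,\infty)\models\varphi_1$ for all $i<j$; $\alpha\models\rho\mapsto\varphi$ iff for all $i\in\mathbb{N}\setminus\{0\}$, $\alpha[0,i)\vdash\rho$ implies $\alpha[i-1,\infty)\models\varphi$. *)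

(* Defs.v *)
From mathcomp Require Import all_boot.
Set Implicit Arguments. Unset Strict Implicit. Unset Printing Implicit Defensive.

Section PSL.
Variable P : finType.

Definition letter := {set P}.
Definition oword := nat -> letter.

Inductive atom : Type :=
| AProp of P
| ANot of atom
| AOr of atom & atom.

Fixpoint atom_sem (x : atom) (A : letter) : bool :=
  match x with
  | AProp p => p \in A
  | ANot y => ~~ atom_sem y A
  | AOr y z => atom_sem y A || atom_sem z A
  end.

Inductive regex : Type :=
| REps
| RAtom of atom
| RPlus of regex & regex
| RCat of regex & regex
| RStar of regex.

(* w[i,j) |- rho, on a word given as a function of positions *)
Inductive rmatch (w : nat -> letter) : regex -> nat -> nat -> Prop :=
| M_eps i : rmatch w REps i i
| M_atom i x : atom_sem x (w i) -> rmatch w (RAtom x) i i.+1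
| M_plusl i j r1 r2 : rmatch w r1 i j -> rmatch w (RPlus r1 r2) i j
| M_plusr i j r1 r2 : rmatch w r2 i j -> rmatch w (RPlus r1 r2) i j
| M_cat i k j r1 r2 : i <= k <= j -> rmatch w r1 i k -> rmatch w r2 k j ->
    rmatch w (RCat r1 r2) i j
| M_star0 i r : rmatch w (RStar r) i i
| M_starS i k j r : i + 1 <= k <= j -> rmatch w r i k -> rmatch w (RStar r) k j ->
    rmatch w (RStar r) i j.

(* finite word as a function (positions beyond the end are never inspected) *)
Definition fword (w : seq letter) : nat -> letter := fun n => nth set0 w n.

Definition lang (r : regex) (w : seq letter) : Prop := rmatch (fword w) r 0 (size w).

Inductive psl : Type :=
| FProp of P
| FNot of psl
| FOr of psl & psl
| FNext of psl
| FUntil of psl & psl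
| FTrig of regex & psl.

Definition wsuffix (a : oword) (i : nat) : oword := fun n => a (i + n).

Fixpoint sat (a : oword) (f : psl) : Prop :=
  match f with
  | FProp p => p \in a 0
  | FNot g => ~ sat a g
  | FOr g h => sat a g \/ sat a h
  | FNext g => sat (wsuffix a 1) g
  | FUntil g h => exists j, sat (wsuffix a j) h /\ forall i, i < j -> sat (wsuffix a i) g
  | FTrig r g => forall i, 0 < i -> rmatch a r 0 i -> sat (wsuffix a i.-1) g
  end.

Definition lasso (u v : seq letter) : oword :=
  fun n => if n < size u then nth set0 u n else nth set0 v ((n - size u) %% size v).

Record dfa := DFA {
  dfa_state : finType;
  dfa_delta : dfa_state -> letter -> dfa_state;
  dfa_init : dfa_state;
  dfa_acc : pred dfa_state }.

Definition dfa_accepts (A : dfa) (w : seq letter) : bool :=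
  @dfa_acc A (foldl (@dfa_delta A) (@dfa_init A) w).

Definition dfa_recognizes (A : dfa) (r : regex) : Prop :=
  forall w, dfa_accepts A w <-> lang r w.

Definition min_dfa_size (r : regex) (m : nat) : Prop :=
  (exists A : dfa, dfa_recognizes A r /\ #|dfa_state A| = m) /\
  (forall A : dfa, dfa_recognizes A r -> m <= #|dfa_state A|).

End PSL.

(* Main.v *)
Require Import Defs.
From mathcomp Require Import all_boot zify.
From Stdlib Require Import FunctionalExtensionality Classical.
Set Implicit Arguments. Unset Strict Implicit.

Section L.
Variable P : finType.

Lemma rmatch_le (w : nat -> letter P) r p q : rmatch w r p q -> p <= q.
Proof. elim=> //= *; lia. Qed.

Lemma shiftA (w : nat -> letter P) r p q : rmatch w r p q ->
  forall w' c, (forall n, p <= n < q -> w n = w' (c+n)) -> rmatch w' r (c+p) (c+q).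
Proof.
elim=> {p q r}.
- move=> i w' c _; constructor.
- move=> i x Hx w' c H; rewrite addnS; constructor; rewrite -H //; lia.
- move=> i j r1 r2 _ IH w' c H; apply: M_plusl; exact: IH.
- move=> i j r1 r2 _ IH w' c H; apply: M_plusr; exact: IH.
- move=> i k j r1 r2 Hk _ IH1 _ IH2 w' c H; apply: (@M_cat _ _ _ (c+k)); first lia.
  + apply: IH1 => n Hn; apply: H; lia.
  + apply: IH2 => n Hn; apply: H; lia.
- move=> i r w' c _; constructor.
- move=> i k j r Hk _ IH1 _ IH2 w' c H; apply: (@M_starS _ _ _ (c+k)); first lia.
  + apply: IH1 => n Hn; apply: H; lia.
  + apply: IH2 => n Hn; apply: H; lia.
Qed.

Lemma shiftB (w : nat -> letter P) r p q : rmatch w r p q ->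
  forall w' c, c <= p -> (forall n, p <= n < q -> w n = w' (n - c)) -> rmatch w' r (p-c) (q-c).
Proof.
elim=> {p q r}.
- move=> i w' c _ _; constructor.
- move=> i x Hx w' c Hc H; have ->: i.+1 - c = (i-c).+1 by lia.
  constructor; rewrite -H //; lia.
- move=> i j r1 r2 _ IH w' c Hc H; apply: M_plusl; exact: IH.
- move=> i j r1 r2 _ IH w' c Hc H; apply: M_plusr; exact: IH.
- move=> i k j r1 r2 Hk _ IH1 _ IH2 w' c Hc H; apply: (@M_cat _ _ _ (k-c)); first lia.
  + apply: IH1 => // n Hn; apply: H; lia.
  + apply: IH2; first lia. move=> n Hn; apply: H; lia.
- move=> i r w' c _ _; constructor.
- move=> i k j r Hk _ IH1 _ IH2 w' c Hc H; apply: (@M_starS _ _ _ (k-c)); first lia.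
  + apply: IH1 => // n Hn; apply: H; lia.
  + apply: IH2; first lia. move=> n Hn; apply: H; lia.
Qed.

Definition word (a : oword P) i j := [seq a n | n <- iota i (j - i)].

Lemma fword_word a i j n : n < j - i -> fword (word a i j) n = a (i + n).
Proof. move=> H; rewrite /fword /word (nth_map 0) ?size_iota // nth_iota //. Qed.

Lemma size_word a i j : size (word a i j) = j - i.
Proof. by rewrite size_map size_iota. Qed.

Lemma rmatch_lang a r i j : i <= j -> rmatch a r i j <-> lang r (word a i j).
Proof.
move=> Hij; rewrite /lang size_word; split.
- move=> H; have := shiftB H (w' := fword (word a i j)) (leqnn i).
  rewrite subnn; apply=> n Hn; rewrite fword_word; first (congr a); lia.
- move=> H; have := shiftA H (w' := a) (c := i).
  rewrite addn0 subnKC //; apply=> n Hn; rewrite fword_word //; lia.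
Qed.

Lemma word_cat a i x j : i <= x <= j -> word a i j = word a i x ++ word a x j.
Proof.
move=> H; rewrite /word -map_cat; congr (map a _).
have ->: j - i = (x - i) + (j - x) by lia.
by rewrite iotaD; congr (_ ++ iota _ _); lia.
Qed.

Lemma word_per (a : oword P) x d L : (forall n, x <= n -> a (n + d) = a n) ->
  map a (iota (x + d) L) = map a (iota x L).
Proof.
elim: L x => //= L IH x H; rewrite H // -addSn IH // => n Hn; apply: H; lia.
Qed.

Lemma lasso_per (u v : seq (letter P)) n k : size u <= n ->
  lasso u v (n + k * size v) = lasso u v n.
Proof.
move=> H; rewrite /lasso; have ->: (n + k * size v < size u) = false by lia.
have ->: (n < size u) = false by lia.
have ->: n + k * size v - size u = (n - size u) + k * size v by lia.
by rewrite addnC modnMDl.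
Qed.


Lemma wsuffixA (a : oword P) i k : wsuffix (wsuffix a i) k = wsuffix a (i + k).
Proof. apply: functional_extensionality => n; by rewrite /wsuffix addnA. Qed.

Lemma pump (u v : seq (letter P)) (rho : regex P) (A : dfa P) m i j :
  0 < size v -> dfa_recognizes A rho -> #|dfa_state A| = m ->
  i < size u + size v -> size u + m.+1 * size v <= j ->
  rmatch (lasso u v) rho i j ->
  exists j' k, [/\ i < j', size u + size v <= j', j = j' + k * size v, j' < j &
     rmatch (lasso u v) rho i j'].
Proof.
move=> Hv HA Hcard Hi Hj Hm.
set a := lasso u v in Hm *.
set V := size v in Hv Hi Hj *; set U := size u in Hi Hj *.
pose st x := foldl (@dfa_delta _ A) (@dfa_init _ A) (word a i x).
pose f (k : 'I_m.+1) := st (U + V + k * V).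
have key : forall s t : 'I_m.+1, s < t -> f s = f t -> exists j' k, [/\ i < j', U + V <= j', j = j' + k * V, j' < j &
     rmatch a rho i j'].
{ move=> s t Hst Hf.
  have Ht := ltn_ord t.
  have Hs := ltn_ord s.
  set x1 := U + V + s * V.
  set x2 := U + V + t * V.
  have Hx2 : x2 <= j.
  { rewrite /x2; apply: leq_trans Hj; have : t * V <= m * V by apply: leq_mul; lia. lia. }
  have Hx12 : x2 = x1 + (t - s) * V.
  { rewrite /x1 /x2 mulnBl; have : s * V <= t * V by apply: leq_mul; lia. lia. }
  have Hd : 0 < (t - s) * V by rewrite muln_gt0; lia.
  exists (j - (t - s) * V), (t - s); split; try lia.
  apply/rmatch_lang; first lia.
  apply/HA; rewrite (@word_cat _ _ x1 _); last lia.
  have Hij : i <= j by lia.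
  have: dfa_accepts A (word a i j) by apply/HA; apply/(rmatch_lang _ _ Hij).
  rewrite (@word_cat _ _ x2 _); last lia.
  rewrite /dfa_accepts !foldl_cat.
  have -> : foldl (dfa_delta (d:=A)) (dfa_init A) (word a i x2) = f t by [].
  rewrite -Hf /f /st -/x1.
  have -> : word a x2 j = word a x1 (j - (t - s) * V); last by [].
  rewrite /word Hx12.
  have ->: j - (x1 + (t - s) * V) = j - (t - s) * V - x1 by lia.
  apply: word_per => n Hn; apply: lasso_per; lia. }
have [s [t [Hst Hne]]] : exists s t : 'I_m.+1, f s = f t /\ s <> t.
{ apply: NNPP => Hn.
  have inj : injective f.
  { move=> x y Hxy; apply: NNPP => Hne; apply: Hn; by exists x, y. }
  have := leq_card f inj; rewrite card_ord Hcard; lia. }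
case: (ltngtP s t) => H.
- exact: key H Hst.
- exact: key H (esym Hst).
- by case: Hne; apply: val_inj.
Qed.

Lemma claim (u v : seq (letter P)) (rho : regex P) (A : dfa P) m i :
  0 < size v -> dfa_recognizes A rho -> #|dfa_state A| = m ->
  i < size u + size v -> forall j, i < j -> 
  rmatch (lasso u v) rho i j ->
  exists j' k, [/\ i < j', j' < size u + m.+1 * size v, rmatch (lasso u v) rho i j',
     j = j' + k * size v & (k = 0 \/ size u < j')].
Proof.
move=> Hv HA Hcard Hi j; elim: j {-2}j (leqnn j) => [|n IH] j Hjn Hij Hm; first lia.
case: (ltnP j (size u + m.+1 * size v)) => Hb.
- exists j, 0; split => //; [lia | by left].
- have [j'' [k [H1 H2 H3 H4 H5]]] := pump Hv HA Hcard Hi Hb Hm.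
  have [j' [k' [G1 G2 G3 G4 G5]]] := IH j'' ltac:(lia) H1 H5.
  exists j', (k' + k); split => //; last by right; case: G5 => G; lia.
  rewrite H3 G4 mulnDl; lia.
Qed.

End L.

Theorem lemma3 (P : finType) (u v : seq {set P}) (rho : regex P) (phi : psl P)
  (m : nat) :
  0 < size v ->
  min_dfa_size rho m ->
  let b := m.+1 in
  forall i, i <= size (u ++ v) - 1 ->
    (sat (wsuffix (lasso u v) i) (FTrig rho phi) <->
     (forall j, i < j < size u + b * size v ->
        rmatch (lasso u v) rho i j -> sat (wsuffix (lasso u v) j.-1) phi)).
Proof.
move=> Hv [[A [HA Hcard]] _] b i; rewrite size_cat => Hi.
have {}Hi : i < size u + size v by lia.
split.
- move=> H j /andP[Hij _] Hm.
  have Hm' : rmatch (wsuffix (lasso u v) i) rho 0 (j - i).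
  { have := shiftB Hm (w' := wsuffix (lasso u v) i) (leqnn i).
    rewrite subnn; apply=> n Hn; rewrite /wsuffix; congr lasso; lia. }
  have := H (j - i) ltac:(lia) Hm'.
  rewrite wsuffixA; have ->: i + (j - i).-1 = j.-1 by lia. done.
- move=> H k Hk Hm /=.
  have := shiftA Hm (w' := lasso u v) (c := i).
  rewrite addn0 => Hm'.
  have {}Hm' := Hm' (fun n _ => erefl).
  have Hik : i < i + k by lia.
  have [j' [k' [G1 G2 G3 G4 G5]]] := claim Hv HA Hcard Hi Hik Hm'.
  have Hj' : i < j' < size u + b * size v by apply/andP; split.
  have := H j' Hj' G3.
  rewrite wsuffixA.
  have E : i + k.-1 = (j' + k' * size v).-1 by rewrite -G4 -!subn1; lia.
  rewrite E.
  case: G5 => [->|G]; first by rewrite mul0n addn0.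
  have ->: wsuffix (lasso u v) (j' + k' * size v).-1 = wsuffix (lasso u v) j'.-1; last by [].
  apply: functional_extensionality => n; rewrite /wsuffix.
  have ->: (j' + k' * size v).-1 + n = (j'.-1 + n) + k' * size v by lia.
  apply: lasso_per; lia.
Qed.
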